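(* Let $n\ge k$, $s\ge t \ge 0$ and $1\le \ell \le k-1$ be integers. Suppose that $\mathcal{H} \subset EM(n,k,s,t)$ and $|\mathcal{H}| = m$. Then $|\partial_{\ell}\mathcal{H}|\ge |\partial_{\ell} L_{m}EM(n,k,s,t)|$.
   Context: $[n]=\{1,\dots,n\}$, $\binom{[n]}{k}$ is the family of $k$-subsets of $[n]$. For $0\le t\le\min\{k,s\}$, $EM(n,k,s,t)=\{A\in\binom{[n]}{k}: |A\cap[s]|\ge t\}$; $EM(n,k,s,t)=\emptyset$ if $t>\min\{k,s\}$, and $=\binom{[n]}{k}$ if $n\le s$. $\partial_\ell\mathcal{H}=\{A\in\binom{[n]}{k-\ell}: A\subset B\text{ for some }B\in\mathcal{H}\}$. Colex order: $A\prec B$ iff $\max\big((A\setminus B)\cup(B\setminus A)\big)\in B$; $L_m\mathcal{F}$ is the set of the first $m$ members of $\mathcal{F}$ in colex order. *)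

(* Defs.v *)
From mathcomp Require Import all_boot.
Set Implicit Arguments. Unset Strict Implicit. Unset Printing Implicit Defensive.

(* Ground set [n] = {1,...,n} is modelled by 'I_n, where ordinal i stands for i+1.
   Hence [s] (intersected with [n]) is the set of ordinals i with i < s. *)

Definition initseg (n s : nat) : {set 'I_n} := [set i : 'I_n | i < s].

Definition EM (n k s t : nat) : {set {set 'I_n}} :=
  [set A : {set 'I_n} | (#|A| == k) && (t <= #|A :&: initseg n s|)].

Definition shadow (n k l : nat) (H : {set {set 'I_n}}) : {set {set 'I_n}} :=
  [set B : {set 'I_n} | (#|B| == k - l) && [exists A in H, B \subset A]].

(* Colex order: A < B iff the maximum of the symmetric difference lies in B,
   i.e. there is x in B \ A such that A and B agree on all elements above x. *)
Definition colex_lt (n : nat) (A B : {set 'I_n}) : bool :=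
  [exists x in B :\: A, [forall y : 'I_n, (x < y) ==> ((y \in A) == (y \in B))]].

Definition colex_init (n : nat) (m : nat) (F : {set {set 'I_n}}) : {set {set 'I_n}} :=
  [set A in F | #|[set B in F | colex_lt B A]| < m].

(* Main.v *)
Require Import Defs.
From mathcomp Require Import all_boot.
From mathcomp Require Import zify.
Set Implicit Arguments. Unset Strict Implicit. Unset Printing Implicit Defensive.


Section Colex.
Variable n : nat.
Implicit Types A B C D E : {set 'I_n}.
Implicit Types F G : {set {set 'I_n}}.

Lemma colexP A B : reflect (exists x : 'I_n, [/\ x \in B, x \notin A &
   forall y : 'I_n, x < y -> (y \in A) = (y \in B)]) (colex_lt A B).
Proof.
apply: (iffP existsP) => [[x /andP[xBA /forallP H]]|[x [xB xA H]]].
- exists x; move: xBA; rewrite inE => /andP[-> ->]; split=> // y xy.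
  by move: (H y); rewrite xy => /eqP.
- exists x; rewrite inE xB xA /=; apply/forallP=> y; apply/implyP=> xy.
  by rewrite H.
Qed.

Lemma colex_irr A : ~~ colex_lt A A.
Proof. by apply/colexP => -[x [-> /negP]]. Qed.

Lemma colex_trans A B C : colex_lt A B -> colex_lt B C -> colex_lt A C.
Proof.
move=> /colexP[x [xB xA Hx]] /colexP[y [yC yB Hy]].
apply/colexP; case: (ltngtP x y) => [xy|yx|/val_inj exy].
- exists y; split=> //; first by rewrite Hx.
  by move=> z yz; rewrite Hx ?Hy //; apply: ltn_trans yz.
- exists x; split=> //; first by rewrite -Hy.
  by move=> z xz; rewrite Hx ?Hy //; apply: ltn_trans xz.
- by subst y; rewrite xB in yB.
Qed.

Lemma colex_asym A B : colex_lt A B -> ~~ colex_lt B A.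
Proof.
move=> AB; apply/negP=> BA; by move: (colex_irr A); rewrite (colex_trans AB BA).
Qed.

Lemma colex_total A B : A != B -> colex_lt A B || colex_lt B A.
Proof.
move=> AB.
have [x xS] : exists x, x \in (A :\: B) :|: (B :\: A).
  apply/set0Pn; apply: contra AB => /eqP H; apply/eqP/setP=> y.
  apply/idP/idP=> Hy; apply/negPn/negP=> Hy'.
  - by move: (in_set0 y); rewrite -H !inE Hy Hy'.
  - by move: (in_set0 y); rewrite -H !inE Hy Hy'.
pose m := [arg max_(i > x in (A :\: B) :|: (B :\: A)) val i].
have [i iS imax] : extremum_spec geq (mem ((A :\: B) :|: (B :\: A))) val m.
  exact: arg_maxnP.
have agree : forall y : 'I_n, i < y -> (y \in A) = (y \in B).
  move=> y iy; apply/idP/idP=> Hy; apply/negPn/negP=> Hy';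
  (have yS : y \in (A :\: B) :|: (B :\: A) by rewrite !inE Hy Hy' ?orbT);
  by have := imax y yS; rewrite /= leqNgt iy.
move: iS; rewrite /= !inE => /orP[/andP[iB iA]|/andP[iA iB]].
- by apply/orP; right; apply/colexP; exists i; split=> // y /agree ->.
- by apply/orP; left; apply/colexP; exists i.
Qed.

Definition rank F A := #|[set B in F | colex_lt B A]|.

Lemma rank_lt F A C : A \in F -> colex_lt A C -> rank F A < rank F C.
Proof.
move=> AF AC; apply: proper_card; apply/properP; split.
- apply/subsetP=> B; rewrite !inE => /andP[-> BA] /=; exact: colex_trans BA AC.
- by exists A; rewrite !inE AF ?AC ?colex_irr.
Qed.

Lemma L_inE m F A : (A \in colex_init m F) = (A \in F) && (rank F A < m).
Proof. by rewrite /colex_init inE. Qed.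

Lemma L_sub m F : colex_init m F \subset F.
Proof. by apply/subsetP=> A; rewrite L_inE => /andP[]. Qed.

Lemma L_mono m m' F : m <= m' -> colex_init m F \subset colex_init m' F.
Proof.
move=> mm; apply/subsetP=> A; rewrite !L_inE => /andP[-> /=] h.
exact: leq_trans h mm.
Qed.

Lemma L_down m F A B : A \in colex_init m F -> B \in F -> colex_lt B A ->
  B \in colex_init m F.
Proof.
rewrite !L_inE => /andP[AF Am] BF BA; rewrite BF /=.
exact: leq_ltn_trans (ltnW (rank_lt BF BA)) Am.
Qed.

Lemma L_card m F : #|colex_init m F| <= m.
Proof.
have [->|/set0Pn[A0 A0G]] := eqVneq (colex_init m F) set0; first by rewrite cards0.
pose A := [arg max_(A > A0 in colex_init m F) rank F A].
have [a aG amax] : extremum_spec geq (mem (colex_init m F)) (rank F) A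
  by exact: arg_maxnP.
move: aG; rewrite /= => aG.
have aF : a \in F by move: aG; rewrite L_inE => /andP[].
have : #|colex_init m F :\ a| <= rank F a.
  apply: subset_leq_card; apply/subsetP=> B; rewrite in_setD1 => /andP[Ba BG].
  have BF : B \in F by move: BG; rewrite L_inE => /andP[].
  rewrite inE BF /=; case/orP: (colex_total Ba) => // aB.
  by have := amax B BG; rewrite /= leqNgt (rank_lt aF aB).
rewrite (cardsD1 a (colex_init m F)) aG; move: aG; rewrite L_inE => /andP[_ am].
move=> h; rewrite add1n; exact: leq_ltn_trans h am.
Qed.

Lemma L_char F G : G \subset F ->
  (forall A B, A \in G -> B \in F -> colex_lt B A -> B \in G) ->
  G = colex_init #|G| F.
Proof.
move=> GF Gd; apply/setP=> A; rewrite L_inE.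
apply/idP/idP.
- move=> AG; rewrite (subsetP GF _ AG) /=.
  have : [set B in F | colex_lt B A] \subset G :\ A.
    apply/subsetP=> B; rewrite !inE => /andP[BF BA].
    rewrite (Gd A B AG BF BA) andbT; apply/eqP=> eBA; subst B.
    by move: (colex_irr A); rewrite BA.
  move/subset_leq_card; rewrite /rank (cardsD1 A G) AG add1n; exact.
- case/andP=> AF Ar; apply/negPn/negP=> AG.
  have : G \subset [set B in F | colex_lt B A].
    apply/subsetP=> B BG; rewrite inE (subsetP GF _ BG) /=.
    have BA : B != A by apply: contraNneq AG => <-.
    case/orP: (colex_total BA) => // AB.
    by move: AG; rewrite (Gd B A BG AF AB).
  by move/subset_leq_card; rewrite /rank leqNgt Ar.
Qed.

End Colex.


Section Gen.
Variable T : finType.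
Implicit Types A B X : {set T}.

Lemma cardU_le A B : #|A :|: B| <= #|A| + #|B|.
Proof. by have := cardsUI A B; lia. Qed.

Lemma cardI_sub A B X : B \subset A -> #|A :&: X| <= #|B :&: X| + (#|A| - #|B|).
Proof.
move=> BA.
have h : A :&: X \subset (B :&: X) :|: (A :\: B).
  apply/subsetP=> x; rewrite !inE => /andP[xA xX].
  by case: (x \in B) => /=; rewrite ?xX ?xA.
have := subset_leq_card h; have := cardU_le (B :&: X) (A :\: B).
rewrite cardsD; move/setIidPr: BA; rewrite setIC => ->; lia.
Qed.

Lemma cardI_mono A B X : A \subset B -> #|A :&: X| <= #|B :&: X|.
Proof. by move=> AB; apply: subset_leq_card; apply: setSI. Qed.

Lemma card_U1 (x : T) A : x \notin A -> #|x |: A| = #|A|.+1.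
Proof. by move=> xA; rewrite cardsU1 xA. Qed.

Lemma card_D1 (x : T) A : x \in A -> #|A :\ x| = #|A|.-1.
Proof. by move=> xA; rewrite (cardsD1 x A) xA. Qed.

Lemma pick_notin A B : #|A| < #|B| -> exists2 x, x \in B & x \notin A.
Proof.
move=> h; apply/subsetPn; apply/negP=> /subset_leq_card; by rewrite leqNgt h.
Qed.

End Gen.

Section Classes.
Variables n s : nat.
Implicit Types A B C D E : {set 'I_n}.
Implicit Types F G H : {set {set 'I_n}}.

Definition Xs := initseg n s.

Definition Cl p k t : {set {set 'I_n}} :=
  [set A : {set 'I_n} | [&& #|A| == k, [forall i in A, p <= i] & t <= #|A :&: Xs|]].

Lemma ClP p k t A : reflect [/\ #|A| = k, forall i, i \in A -> p <= i & t <= #|A :&: Xs|]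
  (A \in Cl p k t).
Proof.
rewrite inE; apply: (iffP and3P) => [[/eqP -> /forallP H ->]|[-> H ->]]; split=> //.
- by move=> i iA; move: (H i); rewrite iA.
- by apply/forallP=> i; apply/implyP; apply: H.
Qed.

Lemma EM_Cl k t : EM n k s t = Cl 0 k t.
Proof.
apply/setP=> A; rewrite !inE /Xs; congr (_ && _).
by have -> : [forall i in A, 0 <= i] by apply/forallP=> i; apply/implyP.
Qed.

Lemma inXs (i : 'I_n) : (i \in Xs) = (i < s).
Proof. by rewrite /Xs /initseg inE. Qed.

Lemma shadowP k l H B : reflect (#|B| = k - l /\ exists2 A, A \in H & B \subset A)
  (B \in shadow k l H).
Proof.
rewrite inE; apply: (iffP andP) => [[/eqP -> /existsP[A /andP[AH BA]]]|[-> [A AH BA]]].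
- by split=> //; exists A.
- by split=> //; apply/existsP; exists A; rewrite AH.
Qed.

Lemma shadow_mono k l H H' : H \subset H' -> shadow k l H \subset shadow k l H'.
Proof.
move=> HH; apply/subsetP=> B /shadowP[cB [A AH BA]]; apply/shadowP; split=> //.
by exists A => //; apply: (subsetP HH).
Qed.

Lemma shadow0 k H : (forall A, A \in H -> #|A| = k) -> shadow k 0 H = H.
Proof.
move=> Hk; apply/setP=> B; apply/shadowP/idP.
- case=> cB [A AH BA]; suff -> : B = A by [].
  by apply/eqP; rewrite eqEcard BA cB (Hk _ AH) subn0 leqnn.
- move=> BH; split; first by rewrite subn0 Hk.
  by exists B.
Qed.

Lemma shadowS k j H : (forall A, A \in H -> #|A| = k) -> j < k ->
  shadow (k - j) 1 (shadow k j H) = shadow k j.+1 H.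
Proof.
move=> Hk jk; apply/setP=> B; apply/shadowP/shadowP.
- case=> cB [B' /shadowP[cB' [A AH B'A]] BB']; split; first by rewrite cB; lia.
  by exists A => //; apply: subset_trans B'A.
- case=> cB [A AH BA].
  have [x xA xB] : exists2 x, x \in A & x \notin B by apply: pick_notin; rewrite cB Hk //; lia.
  split; first by rewrite cB; lia.
  exists (x |: B); last by apply: subsetUr.
  apply/shadowP; split; first by rewrite card_U1 // cB; lia.
  by exists A => //; rewrite subUset sub1set xA BA.
Qed.

Lemma shadow_card k l H B : B \in shadow k l H -> #|B| = k - l.
Proof. by case/shadowP. Qed.

Lemma shadow_small k H : k <= 1 -> #|shadow k 1 H| <= 1.
Proof.
move=> k1; apply/card_le1_eqP => B C /shadowP[cB _] /shadowP[cC _].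
have -> : B = set0 by apply: cards0_eq; rewrite cB; lia.
have -> : C = set0 by apply: cards0_eq; rewrite cC; lia.
by [].
Qed.

Lemma shadow_small_pos k H : k <= 1 -> H != set0 -> 0 < #|shadow k 1 H|.
Proof.
move=> k1 /set0Pn[A AH]; rewrite card_gt0; apply/set0Pn; exists set0.
apply/shadowP; split; first by rewrite cards0; lia.
by exists A => //; apply: sub0set.
Qed.

Lemma shadow_Cl p k t H : H \subset Cl p k t -> shadow k 1 H \subset Cl p (k - 1) (t - 1).
Proof.
move=> HC; apply/subsetP=> B /shadowP[cB [A AH BA]].
have /ClP[cA Ap tA] := subsetP HC _ AH.
apply/ClP; split=> //.
- by move=> i iB; apply: Ap; apply: (subsetP BA).
- have := cardI_sub Xs BA; rewrite cA cB; lia.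
Qed.

End Classes.


Section Shift.
Variables n s : nat.
Implicit Types A B C D E : {set 'I_n}.
Implicit Types F G H : {set {set 'I_n}}.
Variables p0 j : 'I_n.

Definition shf A := if (j \in A) && (p0 \notin A) then p0 |: (A :\ j) else A.

Definition Sft F := (shf @: (F :\: [set A | shf A \in F])) :|: (F :&: [set A | shf A \in F]).

Lemma shf_id A : ~~ ((j \in A) && (p0 \notin A)) -> shf A = A.
Proof. by rewrite /shf => /negbTE ->. Qed.

Lemma shf_ch A : j \in A -> p0 \notin A -> shf A = p0 |: (A :\ j).
Proof. by rewrite /shf => -> ->. Qed.

Lemma shf_inv A : j \in A -> p0 \notin A -> j |: ((p0 |: (A :\ j)) :\ p0) = A.
Proof.
move=> jA pA; have pj : p0 != j by apply: contraNneq pA => ->.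
rewrite setU1K; first by rewrite setD1K.
by rewrite in_setD1 (negbTE pA) andbF.
Qed.

Lemma SftP F A : reflect ((A \in F /\ shf A \in F) \/
   exists2 A0, A0 \in F & shf A0 \notin F /\ A = shf A0) (A \in Sft F).
Proof.
apply: (iffP setUP).
- case=> [/imsetP[A0 /setDP[A0F]] | /setIP[AF]]; rewrite inE.
  + by move=> h ->; right; exists A0.
  + by move=> h; left.
- case=> [[AF h]|[A0 A0F [h ->]]].
  + by right; apply/setIP; rewrite inE.
  + by left; apply/imsetP; exists A0 => //; apply/setDP; rewrite inE.
Qed.

Lemma card_Sft F : #|Sft F| = #|F|.
Proof.
set Bp := [set A | shf A \in F].
have inj : {in F :\: Bp &, injective shf}.
  move=> A B; rewrite !inE => /andP[hA AF] /andP[hB BF].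
  have cA : (j \in A) && (p0 \notin A) by apply: contraR hA => /shf_id ->.
  have cB : (j \in B) && (p0 \notin B) by apply: contraR hB => /shf_id ->.
  case/andP: cA => jA pA; case/andP: cB => jB pB.
  rewrite (shf_ch jA pA) (shf_ch jB pB) => e.
  by rewrite -(shf_inv jA pA) -(shf_inv jB pB) e.
have disj : (shf @: (F :\: Bp)) :&: (F :&: Bp) = set0.
  apply/setP=> C; rewrite inE in_set0; apply/negP=> /andP[/imsetP[A]].
  by rewrite !inE => /andP[h _] -> /andP[h' _]; rewrite h' in h.
have := cardsUI (shf @: (F :\: Bp)) (F :&: Bp).
rewrite disj cards0 addn0 card_in_imset // => ->.
by rewrite addnC cardsID.
Qed.

Lemma shf_card A : #|shf A| = #|A|.
Proof.
case h: ((j \in A) && (p0 \notin A)); last by rewrite shf_id ?h.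
case/andP: h => jA pA; rewrite shf_ch // card_U1 ?card_D1 //.
- by rewrite (cardsD1 j A) jA.
- by rewrite in_setD1 negb_and pA orbT.
Qed.

Lemma shadow_Sft k F : shadow k 1 (Sft F) \subset Sft (shadow k 1 F).
Proof.
apply/subsetP=> B /shadowP[cB [A' /SftP hA' BA']]; apply/SftP.
case: hA' => [[A'F sA'F]|[A AF [sAF eA']]].
- left; split; first by apply/shadowP; split=> //; exists A'.
  case h: ((j \in B) && (p0 \notin B)); last by rewrite shf_id ?h //; apply/shadowP; split=> //; exists A'.
  case/andP: h => jB pB.
  apply/shadowP; split; first by rewrite shf_card.
  rewrite shf_ch //.
  case pA': (p0 \in A').
  + exists A' => //; rewrite subUset sub1set pA' /=.
    by apply: subset_trans BA'; apply: subD1set.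
  + have jA' : j \in A' by apply: (subsetP BA').
    move: sA'F; rewrite shf_ch ?pA' // => h; exists (p0 |: (A' :\ j)) => //.
    by apply: setUS; apply: setSD.
- have cA : (j \in A) && (p0 \notin A) by apply: contraR sAF => /shf_id ->.
  case/andP: cA => jA pA; move: eA' BA'; rewrite shf_ch // => -> BA'.
  have pj : p0 != j by apply: contraNneq pA => ->.
  case pB: (p0 \in B).
  + have jB : j \notin B.
      apply/negP=> /(subsetP BA'); rewrite !inE eqxx /= orbF.
      by apply/negP; rewrite eq_sym.
    set B0 := j |: (B :\ p0).
    have B0A : B0 \subset A.
      rewrite subUset sub1set jA /=; apply/subsetP=> x; rewrite in_setD1 => /andP[xp xB].
      by move: (subsetP BA' x xB); rewrite !inE (negbTE xp) /= => /andP[].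
    have cB0 : #|B0| = #|B|.
      rewrite card_U1 ?card_D1 ?pB //; first by rewrite (cardsD1 p0 B) pB.
      by rewrite in_setD1 negb_and jB orbT.
    have B0s : B0 \in shadow k 1 F by apply/shadowP; split; [rewrite cB0 | exists A].
    have sB0 : shf B0 = B.
      rewrite shf_ch ?setU11 //; last by rewrite !inE negb_or pj /= eqxx.
      rewrite setU1K; first by rewrite setD1K.
      by rewrite in_setD1 (negbTE jB) andbF.
    case Bs: (B \in shadow k 1 F).
    * by left; split=> //; rewrite shf_id // pB andbF.
    * by right; exists B0 => //; rewrite sB0 Bs.
  + have BA : B \subset A.
      apply/subsetP=> x xB; move: (subsetP BA' x xB); rewrite !inE.
      case/orP=> [/eqP ex|/andP[]//]; by move: xB; rewrite ex pB.
    have Bs : B \in shadow k 1 F by apply/shadowP; split=> //; exists A.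
    have jB : j \notin B.
      apply/negP=> /(subsetP BA'); rewrite !inE eqxx /= orbF.
      by apply/negP; rewrite eq_sym.
    by left; split=> //; rewrite shf_id // (negbTE jB).
Qed.

Lemma shadow_Sft_card k F : #|shadow k 1 (Sft F)| <= #|shadow k 1 F|.
Proof. by rewrite -(card_Sft (shadow k 1 F)); apply: subset_leq_card; apply: shadow_Sft. Qed.

Lemma shf_Cl p k t A : val p0 = p -> A \in Cl n s p k t -> shf A \in Cl n s p k t.
Proof.
move=> ep /ClP[cA Ap tA].
case h: ((j \in A) && (p0 \notin A)); last by rewrite shf_id ?h //; apply/ClP.
case/andP: h => jA pA; apply/ClP; split.
- by rewrite shf_card.
- rewrite shf_ch // => i; rewrite !inE => /orP[/eqP -> | /andP[_ /Ap]] //.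
  by rewrite ep.
- rewrite shf_ch //.
  have pj : p0 < j.
    have := Ap j jA; rewrite -ep leq_eqVlt => /orP[/eqP /val_inj e|//].
    by move: pA; rewrite e jA.
  case jX: (j < s).
  + have pX : p0 < s by lia.
    have sub : p0 |: ((A :&: Xs n s) :\ j) \subset (p0 |: (A :\ j)) :&: Xs n s.
      apply/subsetP=> x; rewrite !inE => /orP[/eqP ->|/andP[xj /andP[xA xX]]].
      * by rewrite eqxx pX.
      * by rewrite xj xA xX orbT.
    have := subset_leq_card sub; rewrite card_U1; last by rewrite !inE (negbTE pA) andbF.
    rewrite card_D1; last by rewrite !inE jA jX.
    have : 0 < #|A :&: Xs n s| by rewrite card_gt0; apply/set0Pn; exists j; rewrite !inE jA jX.
    move=> h1 h2; apply: leq_trans tA _; by rewrite -(prednK h1).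
  + have sub : A :&: Xs n s \subset (p0 |: (A :\ j)) :&: Xs n s.
      apply/subsetP=> x; rewrite !inE => /andP[xA xX].
      have xj : x != j by apply: contraTneq xX => ->; rewrite jX.
      by rewrite xj xA xX orbT.
    apply: leq_trans tA _; exact: subset_leq_card sub.
Qed.

Lemma Sft_Cl p k t F : val p0 = p -> F \subset Cl n s p k t -> Sft F \subset Cl n s p k t.
Proof.
move=> ep FC.
have shC := fun A => @shf_Cl p k t A ep.
apply/subsetP=> A /SftP [[AF _]|[A0 A0F [_ ->]]]; first exact: (subsetP FC).
by apply: shC; apply: (subsetP FC).
Qed.

Lemma Sft_pcount F A : A \in F -> j \in A -> p0 \notin A -> p0 |: (A :\ j) \notin F ->
  #|[set B in F | p0 \in B]| < #|[set B in Sft F | p0 \in B]|.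
Proof.
move=> AF jA pA nF; move: (Sft F) (SftP F) => S SP.
apply: proper_card; apply/properP; split.
- apply/subsetP=> B; rewrite !inE => /andP[BF pB]; rewrite pB andbT.
  by apply/SP; left; rewrite shf_id ?pB ?andbF.
- exists (p0 |: (A :\ j)); last by rewrite inE (negbTE nF).
  rewrite inE setU11 andbT; apply/SP; right; exists A => //.
  by rewrite shf_ch.
Qed.

End Shift.


Section Decomp.
Variables n s : nat.
Implicit Types A B C D E : {set 'I_n}.
Implicit Types F G H : {set {set 'I_n}}.

Definition pshifted (p0 : 'I_n) G :=
  forall A j, A \in G -> j \in A -> p0 \notin A -> p0 |: (A :\ j) \in G.

Lemma colex_add (x : 'I_n) A B : x \notin A -> x \notin B -> colex_lt A B ->
  colex_lt (x |: A) (x |: B).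
Proof.
move=> xA xB /colexP[y [yB yA H]]; apply/colexP; exists y; split.
- by rewrite setU1r.
- rewrite !inE negb_or yA andbT; apply: contraNneq xB => <-; done.
- by move=> z yz; rewrite !inE H.
Qed.

Lemma shift_exists p (p0 : 'I_n) k t H : val p0 = p -> H \subset Cl n s p k t ->
  exists G, [/\ G \subset Cl n s p k t, #|G| = #|H|,
     #|shadow k 1 G| <= #|shadow k 1 H| & pshifted p0 G].
Proof.
move=> ep HC.
pose P := fun G : {set {set 'I_n}} => [&& G \subset Cl n s p k t, #|G| == #|H| &
            #|shadow k 1 G| <= #|shadow k 1 H|].
have PH : P H by rewrite /P HC eqxx leqnn.
case: (arg_maxnP (fun G => #|[set B in G | p0 \in B]|) PH) => G /and3P[GC /eqP cG sG] Gmax.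
exists G; split => // A j AG jA pA; apply/negPn/negP => nF.
have : P (Sft p0 j G).
  rewrite /P (Sft_Cl j ep GC) card_Sft cG eqxx /=.
  exact: leq_trans (shadow_Sft_card p0 j k G) sG.
move/Gmax => /= h; have := Sft_pcount AG jA pA nF; by rewrite ltnNge h.
Qed.

Definition lnk (p0 : 'I_n) G := [set A :\ p0 | A in G & p0 \in A].

Lemma lnkP (p0 : 'I_n) G B : reflect (p0 \notin B /\ p0 |: B \in G) (B \in lnk p0 G).
Proof.
apply: (iffP imsetP) => [[A]|[pB BG]].
- rewrite inE => /andP[AG pA] ->; split; first by rewrite !inE eqxx.
  by rewrite setD1K.
- exists (p0 |: B); first by rewrite inE BG setU11.
  by rewrite setU1K.
Qed.

Lemma card_lnk (p0 : 'I_n) G : #|G| = #|[set A in G | p0 \notin A]| + #|lnk p0 G|.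
Proof.
rewrite /lnk card_in_imset.
- rewrite -(cardsID [set A : {set 'I_n} | p0 \in A] G) addnC.
  congr (_ + _); apply: eq_card => A; by rewrite !inE andbC.
- move=> A B; rewrite !inE => /andP[_ pA] /andP[_ pB] e.
  by rewrite -(setD1K pA) -(setD1K pB) e.
Qed.

Section Step.
Variables (p : nat) (p0 : 'I_n) (k t : nat).
Hypothesis ep : val p0 = p.
Hypothesis k2 : 2 <= k.

Lemma ClS_notin A : A \in Cl n s p.+1 k t -> p0 \notin A.
Proof.
case/ClP=> _ Ap _; apply/negP=> /Ap; by rewrite ep ltnn.
Qed.

Lemma ClS_sub k' t' : Cl n s p.+1 k' t' \subset Cl n s p k' t'.
Proof.
apply/subsetP=> A /ClP[cA Ap tA]; apply/ClP; split=> // i /Ap; exact: ltnW.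
Qed.

Lemma lnk_Cl G : G \subset Cl n s p k t -> lnk p0 G \subset Cl n s p.+1 (k - 1) (t - (p < s)).
Proof.
move=> GC; apply/subsetP=> B /lnkP[pB BG].
have /ClP[cA Ap tA] := subsetP GC _ BG.
apply/ClP; split.
- by move: cA; rewrite card_U1 //; lia.
- move=> i iB; have := Ap i (setU1r _ iB); rewrite leq_eqVlt => /orP[/eqP e|//].
  have ip : i = p0 by apply: val_inj; rewrite /= ep e.
  by move: iB; rewrite ip (negbTE pB).
- idtac.
  have [ps|ps] := ltnP p s.
  + have h : (p0 |: B) :&: Xs n s = p0 |: (B :&: Xs n s).
      apply/setP=> x; rewrite !inE; case: eqP => [->|] //=; by rewrite ep ps.
    move: tA; rewrite h card_U1 ?inE ?(negbTE pB) //= => h'; by rewrite leq_subLR add1n.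
  + have h : (p0 |: B) :&: Xs n s = B :&: Xs n s.
      apply/setP=> x; rewrite !inE; case: eqP => [->|] //=; by rewrite ep ltnNge ps /= andbF.
    move: tA; rewrite h /= subn0 => h'; exact: h'.
Qed.

Lemma non_Cl G : G \subset Cl n s p k t ->
  [set A in G | p0 \notin A] \subset Cl n s p.+1 k t.
Proof.
move=> GC; apply/subsetP=> A; rewrite inE => /andP[AG pA].
have /ClP[cA Ap tA] := subsetP GC _ AG.
apply/ClP; split=> // i iA; have := Ap i iA; rewrite leq_eqVlt => /orP[/eqP e|//].
have ip : i = p0 by apply: val_inj; rewrite /= ep e.
by move: pA; rewrite -ip iA.
Qed.

Lemma shadow_non_lnk G : G \subset Cl n s p k t -> pshifted p0 G ->
  shadow k 1 [set A in G | p0 \notin A] \subset lnk p0 G.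
Proof.
move=> GC Gsh; apply/subsetP=> B /shadowP[cB [A]]; rewrite inE => /andP[AG pA] BA.
have /ClP[cA Ap tA] := subsetP GC _ AG.
have [x xA xB] : exists2 x, x \in A & x \notin B by apply: pick_notin; rewrite cB cA; lia.
have eB : B = A :\ x.
  apply/eqP; rewrite eqEcard card_D1 // cA cB.
  have -> : B \subset A :\ x.
    by apply/subsetP=> y yB; rewrite in_setD1 (subsetP BA _ yB) andbT; apply: contraNneq xB => <-.
  by rewrite /=; lia.
apply/lnkP; split; first by apply: contra pA; apply: (subsetP BA).
by rewrite eB; apply: Gsh.
Qed.

Lemma shadow_decomp G : G \subset Cl n s p k t -> pshifted p0 G ->
  #|shadow k 1 G| = #|lnk p0 G| + #|shadow (k - 1) 1 (lnk p0 G)|.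
Proof.
move=> GC Gsh.
have e : shadow k 1 G = lnk p0 G :|: [set p0 |: C | C in shadow (k - 1) 1 (lnk p0 G)].
  apply/setP=> B; apply/idP/idP.
  - move=> /shadowP[cB [A AG BA]]; have /ClP[cA Ap tA] := subsetP GC _ AG.
    rewrite inE; case pB: (p0 \in B).
    + apply/orP; right; apply/imsetP; exists (B :\ p0); last by rewrite setD1K.
      apply/shadowP; split; first by rewrite card_D1 // cB; lia.
      have pA : p0 \in A by apply: (subsetP BA).
      exists (A :\ p0); first by apply/lnkP; rewrite setD1K // !inE eqxx.
      exact: setSD.
    + apply/orP; left.
      case pA: (p0 \in A).
      * apply/lnkP; split; first by rewrite pB.
        suff -> : p0 |: B = A by [].
        apply/eqP; rewrite eqEcard subUset sub1set pA BA card_U1 ?pB // cA cB /=; lia.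
      * apply: (subsetP (shadow_non_lnk GC Gsh)); apply/shadowP; split=> //.
        by exists A => //; rewrite inE AG pA.
  - rewrite inE => /orP[/lnkP[pB BG]|/imsetP[C /shadowP[cC [A' /lnkP[pA' A'G] CA']] ->]].
    + apply/shadowP; split; last by exists (p0 |: B) => //; apply: subsetUr.
      have /ClP[cA _ _] := subsetP GC _ BG.
      by move: cA; rewrite card_U1 //; lia.
    + have /ClP[cA _ _] := subsetP GC _ A'G.
      have pC : p0 \notin C by apply: contra pA'; apply: (subsetP CA').
      apply/shadowP; split.
      * by rewrite card_U1 // cC; move: cA; rewrite card_U1 //; lia.
      * by exists (p0 |: A') => //; apply: setUS.
have disj : lnk p0 G :&: [set p0 |: C | C in shadow (k - 1) 1 (lnk p0 G)] = set0.
  apply/setP=> B; rewrite inE in_set0; apply/negP=> /andP[/lnkP[pB _] /imsetP[C _ eB]].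
  by move: pB; rewrite eB setU11.
have inj : {in shadow (k - 1) 1 (lnk p0 G) &, injective (fun C => p0 |: C)}.
  move=> C C' /shadowP[_ [A /lnkP[pA _] CA]] /shadowP[_ [A' /lnkP[pA' _] CA']] h.
  have pC : p0 \notin C by apply: contra pA; apply: (subsetP CA).
  have pC' : p0 \notin C' by apply: contra pA'; apply: (subsetP CA').
  by rewrite -(setU1K pC) -(setU1K pC') h.
have := cardsUI (lnk p0 G) [set p0 |: C | C in shadow (k - 1) 1 (lnk p0 G)].
by rewrite disj cards0 addn0 -e (card_in_imset inj).
Qed.

End Step.
End Decomp.


Section KK.
Variables n s : nat.
Implicit Types A B C D E : {set 'I_n}.
Implicit Types F G H : {set {set 'I_n}}.

Lemma L_pshifted p (p0 : 'I_n) k t m : val p0 = p ->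
  pshifted p0 (colex_init m (Cl n s p k t)).
Proof.
move=> ep A j AT jA pA.
have AC : A \in Cl n s p k t := subsetP (L_sub m _) _ AT.
have A'C : p0 |: (A :\ j) \in Cl n s p k t by rewrite -(shf_ch jA pA); apply: shf_Cl.
apply: (L_down AT A'C); apply/colexP; exists j; split=> //.
- by rewrite !inE eqxx /= orbF; apply: contraNneq pA => <-.
- move=> y jy; have /ClP[_ Ap _] := AC.
  have pj : p0 < j.
    have := Ap j jA; rewrite -ep leq_eqVlt => /orP[/eqP /val_inj e|//].
    by move: pA; rewrite e jA.
  have yj : y != j by apply/eqP => e; move: jy; rewrite e ltnn.
  have yp : y != p0 by apply/eqP => e; move: jy; rewrite e ltnNge (ltnW pj).
  by rewrite !inE (negbTE yj) (negbTE yp).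
Qed.

Lemma shadow_set0 k l : shadow k l (set0 : {set {set 'I_n}}) = set0.
Proof. by apply/setP=> B; rewrite in_set0; apply/shadowP => -[_ [A]]; rewrite in_set0. Qed.

Lemma KK_triv p k t H : (H == set0) || (k <= 1) ->
  #|shadow k 1 (colex_init #|H| (Cl n s p k t))| <= #|shadow k 1 H|.
Proof.
case: (eqVneq H set0) => [->|Hn] /= h.
- have -> : colex_init #|(set0 : {set {set 'I_n}})| (Cl n s p k t) = set0.
    by apply: cards0_eq; have := L_card 0 (Cl n s p k t); rewrite cards0; lia.
  by rewrite shadow_set0 cards0.
- apply: leq_trans (shadow_small _ h) (shadow_small_pos h Hn).
Qed.

Lemma KK_step p k t
  (IH : forall k' t' H', H' \subset Cl n s p.+1 k' t' ->
     #|shadow k' 1 (colex_init #|H'| (Cl n s p.+1 k' t'))| <= #|shadow k' 1 H'|)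
  (pn : p < n) (k2 : 2 <= k) H : H \subset Cl n s p k t ->
  #|shadow k 1 (colex_init #|H| (Cl n s p k t))| <= #|shadow k 1 H|.
Proof.
move=> HC; pose p0 : 'I_n := Ordinal pn; have ep : val p0 = p by [].
have ep2 : nat_of_ord p0 = p by [].
have [G [GC cG sG Gsh]] := shift_exists ep HC.
rewrite -cG; apply: leq_trans sG; clear H HC cG.
set T := colex_init #|G| (Cl n s p k t).
have TC : T \subset Cl n s p k t by apply: L_sub.
have Tsh : pshifted p0 T by apply: L_pshifted.
have Tc : #|T| <= #|G| by apply: L_card.
rewrite (shadow_decomp ep k2 TC Tsh) (shadow_decomp ep k2 GC Gsh).
set Cl1 := Cl n s p.+1 (k - 1) (t - (p < s)).
have T1e : lnk p0 T = colex_init #|lnk p0 T| Cl1.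
  apply: L_char; first exact: lnk_Cl.
  move=> B B' /lnkP[pB BT] B'C B'B; apply/lnkP.
  have pB' : p0 \notin B' by apply: ClS_notin B'C.
  split=> //; apply: (L_down BT) (colex_add pB' pB B'B).
  case/ClP: B'C => cB' Ap' tB'; apply/ClP; split.
  - by rewrite card_U1 // cB'; lia.
  - move=> i; rewrite in_setU1 => /orP[/eqP ->|/Ap']; [by rewrite ep | exact: ltnW].
  - have h : (p0 |: B') :&: Xs n s = (if p < s then p0 |: (B' :&: Xs n s) else B' :&: Xs n s).
      apply/setP=> x; case: ifP => ps; rewrite !inE; case: eqP => [->|] //=.
      by rewrite ?ps ?andbF.
    rewrite h; case: ifP => ps; move: tB'; rewrite ps /=.
    + by rewrite card_U1 ?inE ?(negbTE pB') // => h'; move: h'; rewrite leq_subLR add1n.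
    + by rewrite subn0.
case: (leqP #|lnk p0 T| #|lnk p0 G|) => [hA|hB].
- apply: leq_add; first exact: hA.
  rewrite T1e.
  apply: leq_trans _ (IH _ _ (lnk p0 G) (lnk_Cl ep k2 GC)).
  by apply: subset_leq_card; apply: shadow_mono; apply: L_mono hA.
- exfalso.
  set T0 := [set A in T | p0 \notin A]; set G0 := [set A in G | p0 \notin A].
  have T0P : forall D, (D \in T0) = (D \in T) && (p0 \notin D) by move=> D; rewrite /T0 inE.
  have c1 := card_lnk p0 T; have c2 := card_lnk p0 G.
  have hG0 : #|T0| < #|G0| by rewrite /T0 /G0; lia.
  have G0C : G0 \subset Cl n s p.+1 k t by apply: non_Cl.
  set Cl0 := Cl n s p.+1 k t.
  have [C0 C0in] : exists C0, C0 \in Cl0 :\: T0.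
    apply/set0Pn; apply/negP => /eqP e.
    have : Cl0 \subset T0 by rewrite -setD_eq0 e.
    move/subset_leq_card => h1; have := leq_trans (subset_leq_card G0C) h1; by rewrite leqNgt hG0.
  pose C := [arg min_(C < C0 in Cl0 :\: T0) rank Cl0 C].
  have [c cin cmin] : extremum_spec leq (mem (Cl0 :\: T0)) (rank Cl0) C
    by exact: arg_minnP.
  move: cin; rewrite /= => /setDP[cC cT0].
  have pc : p0 \notin c by apply: ClS_notin cC.
  have cT : c \notin T by apply: contra cT0 => cT; rewrite T0P cT pc.
  set U := c |: T0.
  have UC : U \subset Cl0.
    apply/subsetP=> E; rewrite in_setU1 => /orP[/eqP -> //|].
    by move=> ET0; exact: (subsetP (non_Cl ep TC) E ET0).
  have Udown : forall E D, E \in U -> D \in Cl0 -> colex_lt D E -> D \in U.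
    move=> E D; rewrite in_setU1 => /orP[/eqP -> | ET0] DC DE.
    - apply/setU1r; apply/negPn/negP => DT0.
      have := cmin D; rewrite /= inE DT0 DC => /(_ isT).
      by rewrite leqNgt (rank_lt DC DE).
    - apply: setU1r; move: ET0; rewrite T0P => /andP[ET pE].
      rewrite T0P (ClS_notin ep DC) andbT.
      exact: (L_down ET (subsetP (ClS_sub _ _ _ _ _) _ DC) DE).
  have Ue : U = colex_init #|U| Cl0 by apply: L_char.
  have cU : #|U| = #|T0|.+1 by rewrite card_U1.
  have key : lnk p0 T \subset shadow k 1 U.
    apply/subsetP => B /lnkP[pB AT].
    have /ClP[cA Ap tA] := subsetP TC _ AT.
    have cB : #|B| = k - 1 by move: cA; rewrite card_U1 // => <-; rewrite subn1.
    have Ac : colex_lt (p0 |: B) c.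
      have Ane : p0 |: B != c by apply: contraNneq pc => <-; rewrite setU11.
      case/orP: (colex_total Ane) => // cA'.
      by move: cT; rewrite (L_down AT (subsetP (ClS_sub _ _ _ _ _) _ cC) cA').
    case/colexP: Ac => x [xc xA xagree].
    have /ClP[ccard cAp ctX] := cC.
    have px : p < x by apply: cAp.
    have xB : x \notin B by apply: contra xA; apply: setU1r.
    pose Z := [set i : 'I_n | (p < i) && (i \notin B)].
    have xZ : x \in Z by rewrite inE px xB.
    pose z := [arg min_(i < x in Z) val i].
    have [zz zZ zmin] : extremum_spec leq (mem Z) val z by exact: arg_minnP.
    move: zZ; rewrite /= inE => /andP[pz zB].
    have zx : zz <= x by apply: zmin.
    have below : forall y : 'I_n, p < y -> y < zz -> y \in B.
      move=> y py yz; apply/negPn/negP => yB.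
      by have := zmin y; rewrite /= inE py yB leqNgt yz => /(_ isT).
    have ne0 : forall y : 'I_n, p < y -> y != p0.
      by move=> y py; apply/eqP => e; move: py; rewrite e ep2 ltnn.
    set D := zz |: B.
    have DC : D \in Cl0.
      apply/ClP; split.
      - by rewrite card_U1 // cB subn1 (ltn_predK k2).
      - move=> i; rewrite in_setU1 => /orP[/eqP -> //|iB].
        have := Ap i (setU1r _ iB); rewrite leq_eqVlt => /orP[/eqP e|//].
        have ip : i = p0 by apply: val_inj; rewrite /=.
        by move: iB; rewrite ip (negbTE pB).
      - case zs: (zz < s).
        + have h1 : (p0 |: B) :&: Xs n s \subset p0 |: (B :&: Xs n s).
            apply/subsetP=> y; rewrite !inE => /andP[/orP[->//|yB] yX].
            by rewrite yB yX orbT.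
          have h2 : zz |: (B :&: Xs n s) \subset D :&: Xs n s.
            apply/subsetP=> y; rewrite !inE => /orP[/eqP ->|/andP[yB yX]].
            * by rewrite eqxx zs.
            * by rewrite yB yX orbT.
          have := subset_leq_card h1; have := subset_leq_card h2.
          rewrite card_U1 ?inE ?(negbTE zB) // cardsU1.
          move=> l2 l1; apply: leq_trans tA _; apply: leq_trans l1 _.
          by apply: leq_trans _ l2; rewrite -add1n leq_add2r leq_b1.
        + have h : c :&: Xs n s \subset D :&: Xs n s.
            apply/subsetP=> y; rewrite !inE => /andP[yc ys].
            rewrite ys andbT below ?orbT //; first exact: cAp.
            by apply: leq_trans ys _; rewrite leqNgt zs.
          by apply: leq_trans ctX _; apply: subset_leq_card.
    have DU : D \in U.
      case: (ltngtP zz x) => [zlt|xlt|zeq].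
      - apply: (Udown c D (setU11 _ _) DC); apply/colexP; exists x; split=> //.
        + rewrite in_setU1 negb_or xB andbT; apply/eqP=> e; move: zlt; rewrite e ltnn //.
        + move=> y xy; rewrite -xagree // !in_setU1.
          have yz : (y == zz) = false by apply/eqP=> e; move: xy; rewrite e ltnNge (ltnW zlt).
          have yp : (y == p0) = false by apply/negbTE; apply: ne0; apply: ltn_trans xy.
          by rewrite yz yp.
      - by move: zx; rewrite leqNgt xlt.
      - have zxe : zz = x by apply: val_inj.
        suff -> : D = c by apply: setU11.
        apply/eqP; rewrite eq_sym eqEcard ccard card_U1 // cB.
        have -> : c \subset D.
          apply/subsetP=> y yc; rewrite in_setU1.
          case: (ltngtP y x) => [yx|xy|/val_inj ->]; last by rewrite zxe eqxx.
          + by rewrite below ?orbT //; [apply: cAp | rewrite zxe].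
          + have : y \in p0 |: B by rewrite xagree.
            rewrite in_setU1 => /orP[/eqP e|->]; last by rewrite orbT.
            by move: (ne0 y (cAp y yc)); rewrite e eqxx.
        by rewrite /= subn1 (ltn_predK k2).
    apply/shadowP; split=> //; exists D => //; apply: subsetUr.
  have : #|lnk p0 T| <= #|lnk p0 G|.
    apply: leq_trans (subset_leq_card key) _.
    apply: leq_trans _ (subset_leq_card (shadow_non_lnk ep k2 GC Gsh)).
    apply: leq_trans _ (IH _ _ _ G0C).
    rewrite Ue; apply: subset_leq_card; apply: shadow_mono; apply: L_mono.
    by rewrite cU.
  by rewrite leqNgt hB.
Qed.

Lemma KK1 d p k t H : n - p <= d -> H \subset Cl n s p k t ->
  #|shadow k 1 (colex_init #|H| (Cl n s p k t))| <= #|shadow k 1 H|.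
Proof.
elim: d p k t H => [|d IH] p k t H hd HC;
  (case: (boolP ((H == set0) || (k <= 1))) => [h|]; first exact: KK_triv);
  rewrite negb_or -ltnNge => /andP[/set0Pn[A AH] k2];
  have /ClP[cA Ap _] := subsetP HC _ AH;
  (have [i iA] : exists i, i \in A by apply/set0Pn; rewrite -card_gt0 cA; lia);
  have pn : p < n by apply: leq_ltn_trans (Ap i iA) (ltn_ord i).
- by move: hd; lia.
- apply: KK_step => // k' t' H' H'C; apply: IH => //; lia.
Qed.

End KK.


Section Shadow.
Variables n s : nat.
Implicit Types A B C D E : {set 'I_n}.
Implicit Types F G H : {set {set 'I_n}}.

Lemma L_shadow k t m : 1 <= k ->
  shadow k 1 (colex_init m (Cl n s 0 k t)) =
  colex_init #|shadow k 1 (colex_init m (Cl n s 0 k t))| (Cl n s 0 (k - 1) (t - 1)).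
Proof.
move=> k1; set T := colex_init m (Cl n s 0 k t).
have TC : T \subset Cl n s 0 k t by apply: L_sub.
apply: L_char; first exact: shadow_Cl.
move=> B B' /shadowP[cB [A AT BA]] B'C B'B.
have /ClP[cA _ tA] := subsetP TC _ AT.
have /ClP[cB' _ tB'] := B'C.
have [a aA aB] : exists2 a, a \in A & a \notin B by apply: pick_notin; rewrite cB cA subn1 (ltn_predK k1).
have eA : A = a |: B.
  apply/eqP; rewrite eq_sym eqEcard subUset sub1set aA BA /= card_U1 // cA cB.
  by rewrite subn1 (ltn_predK k1).
case/colexP: B'B => x [xB xB' xagree].
pose Z := [set i : 'I_n | i \notin B'].
have xZ : x \in Z by rewrite inE xB'.
pose w := [arg min_(i < x in Z) val i].
have [ww wZ wmin] : extremum_spec leq (mem Z) val w by exact: arg_minnP.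
move: wZ; rewrite /= inE => wB'.
have wx : ww <= x by apply: wmin.
have below : forall y : 'I_n, y < ww -> y \in B'.
  move=> y yw; apply/negPn/negP => yB.
  by have := wmin y; rewrite /= inE yB leqNgt yw => /(_ isT).
set A' := ww |: B'.
have A'C : A' \in Cl n s 0 k t.
  apply/ClP; split=> //.
  - by rewrite card_U1 // cB' subn1 (ltn_predK k1).
  - case ws: (ww < s).
    + have h : ww |: (B' :&: Xs n s) \subset A' :&: Xs n s.
        apply/subsetP=> y; rewrite !inE => /orP[/eqP ->|/andP[yB yX]].
        * by rewrite eqxx ws.
        * by rewrite yB yX orbT.
      have := subset_leq_card h; rewrite card_U1 ?inE ?(negbTE wB') // => h'.
      apply: leq_trans h'; move: tB'; rewrite leq_subLR add1n; exact.
    + have h : A :&: Xs n s \subset A' :&: Xs n s.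
        apply/subsetP=> y; rewrite !inE => /andP[yA ys].
        rewrite ys andbT below ?orbT //.
        by apply: leq_trans ys _; rewrite leqNgt ws.
      by apply: leq_trans tA _; apply: subset_leq_card.
have A'T : A' \in T.
  have ax : a != x by apply: contraNneq aB => ->.
  case: (ltngtP x a) => [xa|ax'|/val_inj e]; last by move: ax; rewrite e eqxx.
  - apply: (L_down AT A'C); apply/colexP; exists a; split=> //.
    + rewrite in_setU1 negb_or; apply/andP; split.
      * by apply/eqP=> e; move: xa; rewrite e ltnNge wx.
      * by rewrite xagree.
    + move=> y ay; rewrite eA !in_setU1.
      have yw : (y == ww) = false.
        by apply/eqP=> e; move: ay; rewrite e ltnNge (ltnW (leq_ltn_trans wx xa)).
      have ya : (y == a) = false by apply/eqP=> e; move: ay; rewrite e ltnn.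
      by rewrite yw ya xagree //; apply: ltn_trans ay.
  - case: (ltngtP ww x) => [wlt|xlt|/val_inj wxe].
    + apply: (L_down AT A'C); apply/colexP; exists x; split.
      * by rewrite eA setU1r.
      * rewrite in_setU1 negb_or xB' andbT; apply/eqP=> e; move: wlt; by rewrite e ltnn.
      * move=> y xy; rewrite eA !in_setU1.
        have yw : (y == ww) = false by apply/eqP=> e; move: xy; rewrite e ltnNge (ltnW wlt).
        have ya : (y == a) = false by apply/eqP=> e; move: xy; rewrite e ltnNge (ltnW ax').
        by rewrite yw ya xagree.
    + by move: wx; rewrite leqNgt xlt.
    + suff -> : A' = A by [].
      apply/eqP; rewrite eq_sym eqEcard card_U1 // cA cB' subn1 (ltn_predK k1) leqnn andbT.
      apply/subsetP=> y; rewrite eA in_setU1 => /orP[/eqP ->|yB].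
      * by rewrite setU1r // below // wxe.
      * rewrite in_setU1; case: (ltngtP y x) => [yx|xy|/val_inj ->]; last by rewrite wxe eqxx.
        - by rewrite below ?orbT // wxe.
        - by rewrite xagree // yB orbT.
apply/shadowP; split=> //; exists A' => //; apply: subsetUr.
Qed.

End Shadow.

Unset Implicit Arguments. Set Strict Implicit.

Theorem corollary2p6 (n k s t l : nat) (H : {set {set 'I_n}}) :
  k <= n -> t <= s -> 1 <= l -> l <= k - 1 ->
  H \subset EM n k s t ->
  #|shadow k l (colex_init #|H| (EM n k s t))| <= #|shadow k l H|.
Proof.
move=> _ _ _ lk HE; rewrite EM_Cl in HE *.
set T := colex_init #|H| (Cl n s 0 k t).
have TC : T \subset Cl n s 0 k t by apply: L_sub.
have Hk : forall A, A \in H -> #|A| = k by move=> A /(subsetP HE) /ClP[].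
have Tk : forall A, A \in T -> #|A| = k by move=> A /(subsetP TC) /ClP[].
suff : forall j, j <= l -> [/\ shadow k j T = colex_init #|shadow k j T| (Cl n s 0 (k - j) (t - j)),
   shadow k j H \subset Cl n s 0 (k - j) (t - j) & #|shadow k j T| <= #|shadow k j H|].
  by case/(_ l (leqnn l)).
elim=> [|j IHj] jl.
- rewrite !shadow0 // !subn0; split=> //; last exact: L_card.
  apply: L_char => // A B AT BC BA; exact: L_down AT BC BA.
- have [e1 e2 e3] := IHj (ltnW jl).
  have jk : j < k by clear -jl lk; lia.
  have k1 : 1 <= k - j by clear -jk; lia.
  have ek : k - j.+1 = k - j - 1 by rewrite subnS subn1.
  have et : t - j.+1 = t - j - 1 by rewrite subnS subn1.
  rewrite -(shadowS Hk jk) -(shadowS Tk jk) ek et.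
  split.
  + rewrite e1; exact: L_shadow.
  + exact: shadow_Cl.
  + rewrite e1; apply: leq_trans _ (KK1 (d:=n) (leq_subr 0 n) e2).
    by apply: subset_leq_card; apply: shadow_mono; apply: L_mono.
Qed.
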